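(* Let $l\ge-1$ and $n\ge1$ be integers and let $(h,a)\in S_l\cap S_{l+n}$. Define $L_{(l+1)}=\phi\big(H^{(l+1)}+\sum_{k=0}^{l}a_kH^{(l-k)}\big)$ and $L_{(l+n+1)}=\phi\big(H^{(l+n+1)}+\sum_{k=0}^{l+n}a_kH^{(l+n-k)}\big)$. Then $L_{(l+1)}$ and $L_{(l+n+1)}$ are monic purely differential operators of orders $l+1$ and $l+n+1$ respectively, and the Lax operator $\mathcal L=\phi(z)$ of $h$ satisfies $\mathcal L^n=L_{(l+1)}^{-1}\,L_{(l+n+1)}$. Thus $\phi(S'_{l,l+n})$, where $S'_{l,l+n}=\mu(S_l\cap S_{l+n})$, consists of KP Lax operators whose $n$-th power is a ratio $L_{(l+1)}^{-1}L_{(l+n+1)}$ of two such differential operators (the Dickey–Krichever rational submanifold $\mathcal K_{l+1,n}$).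
   Context: Let $x$ be a space variable; all coefficients below are functions of $x$, and a subscript $x$ denotes $\partial_x$. Let $M$ be the affine space of formal Laurent series $h(z)=z+\sum_{j\ge1}h_j z^{-j}$, $A$ the affine space of formal Laurent series $a(z)=z+\sum_{j\ge0}a_j z^{-j}$, and $N=M\times A$; $\mu(h,a)=h$. The Faà di Bruno iterates of $h$ are $h^{(0)}=1$, $h^{(j+1)}=(\partial_x+h)h^{(j)}=\partial_x h^{(j)}+h\,h^{(j)}$ for all $j\in\mathbb Z$; for $j<0$ they are obtained by solving these recursions backwards from $h^{(0)}=1$, and $\{h^{(j)}\}_{j\in\mathbb Z}$ is a basis (over functions of $x$) of the algebra $L$ of formal Laurent series $\sum_{j\ge -n}k_jz^{-j}$. For $j\ge0$, the KP current $H^{(j)}$ is the unique Laurent series of the form $H^{(j)}=h^{(j)}+\sum_{l=0}^{j-2}p^j_l[h]\,h^{(l)}$, with the $p^j_l[h]$ differential polynomials in the $h_i$, such that $H^{(j)}=z^j+O(z^{-1})$. The Lax map $\phi:L\to\Psi DO$ (pseudodifferential operators in $\partial_x$) is the linear map defined by $\phi(f\,h^{(j)})=f\,\partial_x^{\,j}$ for all $j\in\mathbb Z$ and all $z$-independent functions $f$; the KP Lax operator is $\mathcal L=\phi(z)$. For an integer $l\ge-1$, $S_l\subset N$ is the set of pairs $(h,a)$ satisfying $z^l a=H^{(l+1)}+\sum_{m=0}^{l}a_mH^{(l-m)}$ (empty sum for $l=-1$). *)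

(* Defs.v *)
(* Formal Laurent series in z and pseudodifferential operators
   in d/dx, with coefficients in an abstract commutative differential ring
   (R, D) playing the role of "functions of x". *)
From HB Require Import structures.
From mathcomp Require Import all_boot all_order all_algebra.
From Stdlib Require Import ClassicalEpsilon.
Set Implicit Arguments. Unset Strict Implicit. Unset Printing Implicit Defensive.
Import Order.TTheory GRing.Theory Num.Theory.
Local Open Scope ring_scope.

Section Defs.
Variable R : comNzRingType.

(* A formal series: s k is the coefficient of z^k (resp. of d^k for a PsiDO). *)
Definition series := int -> R.

Definition bounded_by (s : series) (N : int) := forall k : int, N < k -> s k = 0.
Definition bounded (s : series) := exists N, bounded_by s N.

(* a chosen upper bound of the support (meaningful when s is bounded) *)
Definition deg (s : series) : int :=
  epsilon (inhabits 0%R) (fun N => bounded_by s N).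

Definition zrange (lo hi : int) : seq int :=
  if lo <= hi then [seq lo + t%:Z | t <- iota 0 (absz (hi - lo + 1))] else [::].

Definition sone : series := fun k => (k == 0)%:R.
Definition zser : series := fun k => (k == 1)%:R.
Definition sadd (f g : series) : series := fun k => f k + g k.
Definition sder (D : R -> R) (f : series) : series := fun k => D (f k).
Definition smul (f g : series) : series :=
  fun k => \sum_(i <- zrange (k - deg g) (deg f)) f i * g (k - i).

Definition hser (hc : nat -> R) : series :=
  fun k => if k == 1 then 1 else if k < 0 then hc (absz k) else 0.
Definition aser (ac : nat -> R) : series :=
  fun k => if k == 1 then 1 else if k <= 0 then ac (absz k) else 0.

Definition FdB (D : R -> R) (h : series) (hf : int -> series) :=
  (forall j, bounded (hf j)) /\ hf 0 = sone /\
  forall j : int, hf (j + 1) = sadd (sder D (hf j)) (smul h (hf j)).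

Definition KPcurrent (hf : int -> series) (j : nat) (Hj : series) :=
  (exists p : nat -> R,
      Hj = fun k => hf j%:Z k + \sum_(i < j.-1) p i * hf i%:Z k) /\
  forall k : int, 0 <= k -> Hj k = (k == j%:Z)%:R.

Definition Lgen (H : nat -> series) (ac : nat -> R) (l : int) : series :=
  fun k => H (absz (l + 1)) k + \sum_(m < absz (l + 1)) ac m * H (absz (l - m%:Z)) k.

Definition inS (H : nat -> series) (l : int) (ac : nat -> R) :=
  forall k : int, aser ac (k - l) = Lgen H ac l k.

(* Lax map phi : L -> PsiDO, phi(sum_j c_j h^(j)) = sum_j c_j d^j.
   phi k is the (unique) bounded-above coefficient family P with
   k = sum_j P_j h^(j), coefficientwise (for z^m only j >= m contribute). *)
Definition phi (hf : int -> series) (k : series) : series :=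
  epsilon (inhabits (fun _ => 0))
    (fun P => bounded P /\
       forall m : int, k m = \sum_(j <- zrange m (deg P)) P j * hf j m).

Definition binz (i : int) (k : nat) : int :=
  match i with
  | Posz n => ('C(n, k))%:Z
  | Negz n => (-1) ^+ k * ('C(n + k, k))%:Z
  end.

(* composition of pseudodifferential operators (P j = coefficient of d^j):
   (f d^i) o (g d^j) = sum_{k>=0} binom(i,k) f g^(k) d^(i+j-k) *)
Definition pmul (D : R -> R) (A B : series) : series :=
  fun m => \sum_(i <- zrange (m - deg B) (deg A))
             \sum_(k < absz (deg B - m + i + 1))
                (binz i k)%:~R * A i * iter k D (B (m - i + k%:Z)).

Definition pone : series := sone.
Definition ppow (D : R -> R) (A : series) (n : nat) : series :=
  iter n (fun X => pmul D X A) pone.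

Definition monic_diff (P : series) (p : int) :=
  P p = 1 /\ forall j : int, (j < 0 \/ p < j) -> P j = 0.

End Defs.

(* Main.v *)
Require Import Defs.
From HB Require Import structures.
From mathcomp Require Import all_boot all_order all_algebra.
From mathcomp Require Import zify ring.
From Stdlib Require Import ClassicalEpsilon FunctionalExtensionality.
Set Implicit Arguments. Unset Strict Implicit. Unset Printing Implicit Defensive.
Import Order.TTheory GRing.Theory Num.Theory.
Local Open Scope ring_scope.

Lemma mem_zrange a b i : (i \in zrange a b) = (a <= i <= b).
Proof.
rewrite /zrange; case: ifP => hab.
  apply/mapP/idP.
    by case=> t; rewrite mem_iota => /andP[_ ht] ->; apply/andP; split; lia.
  move=> /andP[h1 h2]; exists (absz (i - a)); last lia.
  rewrite mem_iota; apply/andP; split; first by [].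
  rewrite add0n; lia.
by rewrite in_nil; apply/esym/negbTE; apply/negP => /andP[h1 h2]; move/negbT: hab; lia.
Qed.

Lemma uniq_zrange a b : uniq (zrange a b).
Proof.
rewrite /zrange; case: ifP => // _.
rewrite map_inj_uniq ?iota_uniq // => x y /eqP h; apply/eqP; lia.
Qed.

Section Zs.
Variable R : comNzRingType.

Lemma zsum_sub (F : int -> R) a b a' b' :
  (forall i, a <= i <= b -> a' <= i <= b') ->
  (forall i, a' <= i <= b' -> ~~ (a <= i <= b) -> F i = 0) ->
  \sum_(i <- zrange a' b') F i = \sum_(i <- zrange a b) F i.
Proof.
move=> hsub hz.
rewrite (bigID (fun i => a <= i <= b)) /=.
rewrite [X in _ + X]big1_seq ?addr0; last first.
  by move=> i /andP[hn]; rewrite mem_zrange => hi; apply: hz.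
rewrite -big_filter; apply: perm_big.
apply: uniq_perm; rewrite ?filter_uniq ?uniq_zrange //.
move=> i; rewrite mem_filter !mem_zrange.
by apply/andP/idP => [[]//|h]; split => //; apply: hsub.
Qed.

Lemma zrange1 i : zrange i i = [:: i].
Proof. by rewrite /zrange lexx subrr add0r /= addr0. Qed.

Lemma zsum1 (F : int -> R) a b j : a <= j <= b ->
  (forall i, a <= i <= b -> i != j -> F i = 0) ->
  \sum_(i <- zrange a b) F i = F j.
Proof.
move=> hj hz; rewrite (@zsum_sub F j j) ?zrange1 ?big_seq1 //.
  by move=> i /andP[h1 h2]; have -> : i = j by lia.
move=> i hi hn; apply: hz => //; apply/negP => /eqP e; move: hn; rewrite e; lia.
Qed.

Lemma zsum_empty (F : int -> R) a b : b < a -> \sum_(i <- zrange a b) F i = 0.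
Proof. by move=> h; rewrite /zrange; case: ifP; [lia|rewrite big_nil]. Qed.

Lemma zsum_shift (F : int -> R) a b r :
  \sum_(i <- zrange a b) F (i + r) = \sum_(i <- zrange (a + r) (b + r)) F i.
Proof.
rewrite /zrange; have -> : (a + r <= b + r) = (a <= b) by lia.
case: ifP => _; last by rewrite !big_nil.
rewrite big_map [RHS]big_map; have -> : b + r - (a + r) + 1 = b - a + 1 by lia.
by apply: eq_bigr => t _; congr F; lia.
Qed.

Lemma zsum_reidx (F : int -> R) a b r :
  \sum_(i <- zrange a b) F i = \sum_(i <- zrange (a - r) (b - r)) F (i + r).
Proof.
rewrite zsum_shift; have -> : a - r + r = a by lia.
by have -> : b - r + r = b by lia.
Qed.

Lemma zsum_split1 (F : int -> R) a b j : a <= j <= b ->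
  \sum_(i <- zrange a b) F i = F j + \sum_(i <- zrange a b | i != j) F i.
Proof. by move=> h; rewrite (bigD1_seq j) ?mem_zrange ?uniq_zrange. Qed.

Lemma sum_count (F : nat -> R) c c' c0 : (c0 <= c)%N -> (c0 <= c')%N ->
  (forall k, (c0 <= k)%N -> F k = 0) ->
  \sum_(k < c) F k = \sum_(k < c') F k.
Proof.
move=> h1 h2 hz.
have E : forall d, (c0 <= d)%N -> \sum_(k < d) F k = \sum_(k < c0) F k.
  move=> d hd; rewrite -!(big_mkord xpredT) (@big_cat_nat _ _ _ c0 0 d _ _ (leq0n c0) hd) /=.
  rewrite [X in _ + X]big_nat_cond [X in _ + X]big1 ?addr0 // => k /andP[/andP[hk _] _]; exact: hz.
by rewrite !E.
Qed.

End Zs.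

Lemma zind (P : int -> Prop) : P 0 -> (forall j, P j -> P (j + 1)) ->
  (forall j, P (j + 1) -> P j) -> forall j, P j.
Proof.
move=> h0 hu hd.
have up : forall n : nat, P n%:Z.
  elim=> // n IH; have -> : n.+1%:Z = n%:Z + 1 by lia. exact: hu.
have dn : forall n : nat, P (- n%:Z).
  elim=> [|n IH]; first by rewrite oppr0.
  apply: hd; have -> : - n.+1%:Z + 1 = - n%:Z by lia. exact: IH.
move=> j; case: (lerP 0 j) => hj.
  have -> : j = (absz j)%:Z by lia. exact: up.
have -> : j = - (absz j)%:Z by lia. exact: dn.
Qed.

Lemma zdown (P : int -> Prop) (N : int) : (forall j, N < j -> P j) ->
  (forall M, (forall j, M < j -> P j) -> P M) -> forall j, P j.
Proof.
move=> hN hs.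
have H : forall t : nat, forall j, N - t%:Z < j -> P j.
  elim=> [|t IH] j hj; first by apply: hN; lia.
  case: (ltrP (N - t%:Z) j) => h; first exact: IH.
  apply: hs => i hi; apply: IH; lia.
move=> j; apply: (H (absz (N - j) + 1)%N); lia.
Qed.

Lemma deg_spec (R : comNzRingType) (s : series R) : bounded s -> bounded_by s (deg s).
Proof. by move=> hb; rewrite /deg; apply: epsilon_spec. Qed.

Lemma bb_min (R : comNzRingType) (s : series R) N1 N2 :
  bounded_by s N1 -> bounded_by s N2 -> bounded_by s (Num.min N1 N2).
Proof.
move=> h1 h2 k hk; case: (lerP N1 N2) => h.
  by apply: h1; move: hk; rewrite /Num.min; case: ifP; lia.
by apply: h2; move: hk; rewrite /Num.min; case: ifP; lia.
Qed.

Lemma bb_le (R : comNzRingType) (s : series R) N1 N2 :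
  N1 <= N2 -> bounded_by s N1 -> bounded_by s N2.
Proof. by move=> h h1 k hk; apply: h1; lia. Qed.

Lemma zsum_delta (R : comNzRingType) (F : int -> R) a b j0 :
  \sum_(j <- zrange a b) (j == j0)%:R * F j = if a <= j0 <= b then F j0 else 0.
Proof.
case: ifP => h.
  rewrite (@zsum1 _ _ _ _ j0) ?eqxx ?mul1r // => i _ /negbTE ->; by rewrite mul0r.
rewrite big1_seq // => i /andP[_]; rewrite mem_zrange => hi; case: eqP => e; last by rewrite mul0r.
by move: h; rewrite -e hi.
Qed.

Section Tri.
Variable R : comNzRingType.
Variables (s : int) (c : int -> int -> R).
Hypothesis c0 : forall j m, j + s < m -> c j m = 0.
Hypothesis c1 : forall j, c j (j + s) = 1.

Definition FN (P : series R) N m := \sum_(j <- zrange (m - s) N) P j * c j m.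

Lemma FN_mono P N N0 m : N0 <= N -> bounded_by P N0 -> FN P N m = FN P N0 m.
Proof.
move=> hN hb; apply: zsum_sub; first by move=> i; lia.
by move=> i hi hn; rewrite hb ?mul0r //; lia.
Qed.

Lemma FN_b P N1 N2 m : bounded_by P N1 -> bounded_by P N2 -> FN P N1 m = FN P N2 m.
Proof.
move=> h1 h2; have h := bb_min h1 h2.
rewrite (@FN_mono _ N1 (Num.min N1 N2)) // ?(@FN_mono _ N2 (Num.min N1 N2)) //;
 rewrite /Num.min; case: ifP; lia.
Qed.

Lemma FN_add P Q N m : FN (fun j => P j + Q j) N m = FN P N m + FN Q N m.
Proof. by rewrite /FN -big_split; apply: eq_bigr => i _; rewrite mulrDl. Qed.

Lemma TRI_uniq P Q N : bounded_by P N -> bounded_by Q N ->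
  (forall m, FN P N m = FN Q N m) -> P = Q.
Proof.
move=> hP hQ hF; apply: functional_extensionality.
apply: (@zdown (fun j => P j = Q j) N); first by move=> j hj; rewrite hP ?hQ.
move=> M IH; case: (ltrP N M) => hM; first by rewrite hP ?hQ.
have := hF (M + s); rewrite /FN; have -> : M + s - s = M by lia.
rewrite !(@zsum_split1 _ _ _ _ M) ?c1 ?mulr1; try lia.
rewrite [X in _ + X = _]big_seq_cond [X in _ = _ + X]big_seq_cond.
rewrite (eq_bigr (fun j => Q j * c j (M + s))); first by move/addIr.
by move=> i /andP[]; rewrite mem_zrange => h1 h2; rewrite IH //; move/eqP: h2; lia.
Qed.

Section Ex.
Variables (k : series R) (K : int).
Hypothesis hk : bounded_by k K.
Let N := K - s.

Definition corr (t : nat) (Q : series R) : series R := fun j =>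
  Q j + (j == N - t%:Z)%:R * (k (N - t%:Z + s) - FN Q N (N - t%:Z + s)).

Fixpoint Pt (t : nat) : series R :=
  match t with 0 => corr 0 (fun _ => 0) | t'.+1 => corr t (Pt t') end.

Lemma corr_step t Q :
  (forall j, N < j \/ j < N - t%:Z + 1 -> Q j = 0) ->
  (forall m, N - t%:Z + 1 <= m - s <= N -> FN Q N m = k m) ->
  (forall j, N < j \/ j < N - t%:Z -> corr t Q j = 0) /\
  (forall m, N - t%:Z <= m - s <= N -> FN (corr t Q) N m = k m).
Proof.
move=> hQ hF; split.
  move=> j hj; rewrite /corr hQ; last lia.
  by case: eqP => e; [exfalso; lia | rewrite mul0r addr0].
move=> m hm; rewrite /corr FN_add.
set e := (k (N - t%:Z + s) - FN Q N (N - t%:Z + s)).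
have -> : FN (fun j => (j == N - t%:Z)%:R * e) N m =
   if m - s <= N - t%:Z <= N then e * c (N - t%:Z) m else 0.
  rewrite /FN -(zsum_delta (fun j => e * c j m)); apply: eq_bigr => i _; by rewrite mulrA.
case: ifP => h.
  have em : m = N - t%:Z + s by lia.
  by rewrite em c1 mulr1 /e addrC subrK.
by rewrite addr0 hF //; lia.
Qed.

Lemma Pt_inv t :
  (forall j, N < j \/ j < N - t%:Z -> Pt t j = 0) /\
  (forall m, N - t%:Z <= m - s <= N -> FN (Pt t) N m = k m).
Proof.
elim: t => [|t [I1 I2]] /=.
  by apply: corr_step => [j _|m hm] //; exfalso; lia.
apply: corr_step => [j hj|m hm]; [apply: I1|apply: I2]; lia.
Qed.

Lemma Pt_stable t d j : N - t%:Z <= j -> Pt (t + d) j = Pt t j.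
Proof.
move=> hj; elim: d => [|d IH]; first by rewrite addn0.
rewrite addnS /= /corr IH; case: eqP => e; last by rewrite mul0r addr0.
exfalso; lia.
Qed.

Lemma TRI_ex : exists P, bounded_by P N /\ forall m, FN P N m = k m.
Proof.
pose P j := Pt (absz (N - j)) j.
have hb : bounded_by P N by move=> j hj; rewrite /P (proj1 (Pt_inv _)) //; lia.
exists P; split => // m.
case: (ltrP N (m - s)) => hm.
  by rewrite /FN zsum_empty // hk //; rewrite /N in hm; lia.
pose T := absz (N - (m - s))%R.
rewrite -(proj2 (Pt_inv T)); last lia.
apply: eq_big_seq => i; rewrite mem_zrange => hi; congr (_ * _).
rewrite /P; have -> : T = addn (absz (N - i)%R) (subn T (absz (N - i)%R)) by rewrite /T; lia.
by rewrite Pt_stable //; lia.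
Qed.
End Ex.
End Tri.

Lemma binz0 i : binz i 0 = 1.
Proof. by case: i => n //=; rewrite bin0. Qed.

Lemma binzS i k : binz (i + 1) k.+1 = binz i k.+1 + binz i k.
Proof.
case: i => n.
  have -> : (Posz n + 1) = Posz n.+1 by rewrite -addn1 PoszD.
  by rewrite /= binS PoszD addrC.
case: n => [|n].
  have -> : Negz 0 + 1 = Posz 0 by rewrite NegzE; lia.
  rewrite /= bin0n add0n !binn exprS /=; ring.
have -> : Negz n.+1 + 1 = Negz n by rewrite !NegzE; lia.
rewrite /= addSn addnS exprS.
rewrite (binS (n + k).+1) !PoszD addSn; ring.
Qed.

Section Main.
Variable R : comNzRingType.
Variable D : R -> R.
Hypothesis HDadd : forall x y, D (x + y) = D x + D y.
Hypothesis HDmul : forall x y, D (x * y) = D x * y + x * D y.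

Lemma D0 : D 0 = 0.
Proof. have := HDadd 0 0; rewrite addr0 => h. by apply: (addrI (D 0)); rewrite addr0 -h. Qed.

Lemma D1 : D 1 = 0.
Proof. have := HDmul 1 1; rewrite !mulr1 mul1r => h. by apply: (addrI (D 1)); rewrite addr0 -h. Qed.

Lemma Dopp x : D (- x) = - D x.
Proof. by apply: (addrI (D x)); rewrite -HDadd !subrr D0. Qed.

Lemma Dsum (I : Type) (s : seq I) (P : pred I) (F : I -> R) :
  D (\sum_(i <- s | P i) F i) = \sum_(i <- s | P i) D (F i).
Proof. exact: (big_morph D HDadd D0). Qed.

Lemma Dnat n : D n%:R = 0.
Proof. elim: n => [|n IH]; first exact: D0. by rewrite -addn1 natrD HDadd IH D1 addr0. Qed.

Lemma Dint (z : int) : D z%:~R = 0.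
Proof. by case: z => n; rewrite ?NegzE ?mulrNz ?Dopp Dnat ?oppr0. Qed.

Lemma Dcz (z : int) x : D (z%:~R * x) = z%:~R * D x.
Proof. by rewrite HDmul Dint mul0r add0r. Qed.

Lemma iD0 k : iter k D 0 = 0.
Proof. by elim: k => //= k ->; exact: D0. Qed.

Lemma iDadd k x y : iter k D (x + y) = iter k D x + iter k D y.
Proof. by elim: k => //= k ->; rewrite HDadd. Qed.

Lemma iDsum k (I : Type) (s : seq I) (P : pred I) (F : I -> R) :
  iter k D (\sum_(i <- s | P i) F i) = \sum_(i <- s | P i) iter k D (F i).
Proof. apply: (big_morph (iter k D) (iDadd k) (iD0 k)). Qed.

Lemma iDcz k (z : int) x : iter k D (z%:~R * x) = z%:~R * iter k D x.
Proof. by elim: k => //= k ->; rewrite Dcz. Qed.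

Lemma iDSr k x : iter k.+1 D x = iter k D (D x).
Proof. exact: iterSr. Qed.

Lemma smul_b (f g : series R) Nf Ng k : bounded_by f Nf -> bounded_by g Ng ->
  smul f g k = \sum_(i <- zrange (k - Ng) Nf) f i * g (k - i).
Proof.
move=> hf hg.
have hbf : bounded f by exists Nf. have hbg : bounded g by exists Ng.
have key : forall Nf1 Ng1 Nf0 Ng0, bounded_by f Nf0 -> bounded_by g Ng0 ->
    Nf0 <= Nf1 -> Ng0 <= Ng1 ->
    \sum_(i <- zrange (k - Ng1) Nf1) f i * g (k - i) =
    \sum_(i <- zrange (k - Ng0) Nf0) f i * g (k - i).
  move=> Nf1 Ng1 Nf0 Ng0 h1 h2 l1 l2; apply: zsum_sub; first by move=> i; lia.
  move=> i _ hi; case: (lerP i Nf0) => c.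
    by rewrite (h2 (k - i)) ?mulr0 //; lia.
  by rewrite h1 ?mul0r.
rewrite /smul (key _ _ _ _ (bb_min (deg_spec hbf) hf) (bb_min (deg_spec hbg) hg)); try by rewrite /Num.min; case: ifP; lia.
by rewrite (key _ _ _ _ (bb_min (deg_spec hbf) hf) (bb_min (deg_spec hbg) hg)) //; rewrite /Num.min; case: ifP; lia.
Qed.

Variable hc : nat -> R.
Variable hf : int -> series R.
Hypothesis Hhf : FdB D (hser hc) hf.

Lemma hser_b : bounded_by (hser hc) 1.
Proof. by move=> k hk; rewrite /hser; case: eqP => e; [exfalso; lia|case: ifP => e2 //; exfalso; lia]. Qed.

Lemma hser1 : hser hc 1 = 1.
Proof. by []. Qed.

Lemma hf_rec j N k : bounded_by (hf j) N ->
  hf (j + 1) k = D (hf j k) + \sum_(i <- zrange (k - N) 1) hser hc i * hf j (k - i).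
Proof.
move=> hb; case: Hhf => _ [_ ->]; rewrite /sadd /sder.
by rewrite (smul_b _ hser_b hb).
Qed.

Lemma hf_struct j : bounded_by (hf j) j /\ hf j j = 1.
Proof.
elim/zind: j.
- case: Hhf => _ [-> _]; split; last by [].
  by move=> k hk; rewrite /sone; case: eqP => // e; lia.
- move=> j [hb ht]; split.
    move=> k hk; rewrite (hf_rec _ hb) hb; last lia.
    by rewrite D0 add0r zsum_empty //; lia.
  rewrite (hf_rec _ hb) hb; last lia.
  rewrite D0 add0r (@zsum1 _ _ _ _ 1); first by rewrite hser1 mul1r; have -> : j + 1 - 1 = j by lia.
    lia.
  move=> i hi hn; exfalso; lia.
- move=> j [hb ht].
  case: Hhf => [hbnd _]; case: (hbnd j) => N hN.
  have hbj : bounded_by (hf j) j.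
    suff H : forall k, j < k -> hf j k = 0 by [].
    apply: (@zdown (fun k => j < k -> hf j k = 0) N).
      by move=> k hk _; apply: hN.
    move=> M IH hjM.
    have hbM : bounded_by (hf j) M by move=> k hk; apply: IH => //; lia.
    have := hb (M + 1); rewrite (hf_rec _ hbM) hbM; last lia.
    rewrite D0 add0r (@zsum1 _ _ _ _ 1); last (by move=> i hi hn; exfalso; lia); last lia.
    rewrite hser1 mul1r => <-; [by have -> : M + 1 - 1 = M by lia | lia].
  split => //.
  have := ht; rewrite (hf_rec _ hbj) hbj; last lia.
  rewrite D0 add0r (@zsum1 _ _ _ _ 1); last (by move=> i hi hn; exfalso; lia); last lia.
  by rewrite hser1 mul1r; have -> : j + 1 - 1 = j by lia.
Qed.

Lemma hf_b j : bounded_by (hf j) j. Proof. by case: (hf_struct j). Qed.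
Lemma hf_top j : hf j j = 1. Proof. by case: (hf_struct j). Qed.




Definition evN (P : series R) (N : int) (m : int) := \sum_(j <- zrange m N) P j * hf j m.

Lemma hf_c0 j m : j + 0 < m -> hf j m = 0.
Proof. by move=> h; apply: hf_b; lia. Qed.
Lemma hf_c1 j : hf j (j + 0) = 1.
Proof. by rewrite addr0 hf_top. Qed.

Lemma evN_FN P N m : evN P N m = FN 0 (fun j m => hf j m) P N m.
Proof. by rewrite /FN subr0. Qed.

Lemma evN_b P N1 N2 m : bounded_by P N1 -> bounded_by P N2 -> evN P N1 m = evN P N2 m.
Proof. by move=> h1 h2; rewrite !evN_FN (FN_b _ _ _ h1 h2). Qed.

Lemma evN_bb P N : bounded_by (evN P N) N.
Proof. by move=> m hm; rewrite /evN zsum_empty. Qed.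

Lemma bb_max (P : series R) N1 N2 : bounded_by P N1 -> bounded_by P (Num.max N1 N2).
Proof. by move=> h; apply: bb_le h; rewrite /Num.max; case: ifP; lia. Qed.

Lemma phi_spec (k : series R) K : bounded_by k K ->
  bounded (phi hf k) /\ forall m, k m = evN (phi hf k) (deg (phi hf k)) m.
Proof.
move=> hk.
have [P [hP hF]] := TRI_ex hf_c1 hk.
have ex : exists P, bounded P /\
    forall m, k m = \sum_(j <- zrange m (deg P)) P j * hf j m.
  exists P; split; first by exists (K - 0).
  move=> m; rewrite -hF -evN_FN; apply: evN_b => //; apply: deg_spec; by exists (K - 0).
exact: (epsilon_spec (inhabits (fun _ => 0)) _ ex).
Qed.

Lemma phi_eq (k : series R) P N : bounded_by P N -> (forall m, k m = evN P N m) ->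
  phi hf k = P.
Proof.
move=> hP hk.
have hkb : bounded_by k N by move=> m hm; rewrite hk evN_bb.
have [[N' hb] hphi] := phi_spec hkb.
have hd := deg_spec (ex_intro _ N' hb).
have b1 : bounded_by (phi hf k) (Num.max N N') by apply: bb_le hb; rewrite /Num.max; case: ifP; lia.
have b2 : bounded_by P (Num.max N N') by apply: bb_le hP; rewrite /Num.max; case: ifP; lia.
apply: (@TRI_uniq _ 0 (fun j m => hf j m) hf_c1 _ _ (Num.max N N')) => // m.
rewrite -!evN_FN (@evN_b _ _ N' m) // (@evN_b P _ N m) //.
by rewrite -hk (@evN_b _ N' (deg (phi hf k))) // -hphi.
Qed.

Lemma evN_lin (I : Type) (r : seq I) (a : I -> R) (X : I -> series R) N m :
  evN (fun k => \sum_(i <- r) a i * X i k) N m = \sum_(i <- r) a i * evN (X i) N m.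
Proof.
rewrite /evN; under eq_bigr do rewrite mulr_suml.
rewrite exchange_big; apply: eq_bigr => i _; rewrite mulr_sumr.
by apply: eq_bigr => j _; rewrite mulrA.
Qed.

Definition dlt (j : int) : series R := fun k => (k == j)%:R.

Lemma evN_dlt j N m : j <= N -> evN (dlt j) N m = hf j m.
Proof.
move=> hj; rewrite /evN (eq_bigr (fun i => (i == j)%:R * hf i m)) // zsum_delta.
by case: ifP => // h; rewrite hf_b //; lia.
Qed.

Lemma dlt_b j : bounded_by (dlt j) j.
Proof. by move=> k hk; rewrite /dlt; case: eqP => // e; lia. Qed.

Lemma evN_add (P Q : series R) N m : evN (fun k => P k + Q k) N m = evN P N m + evN Q N m.
Proof. by rewrite /evN -big_split; apply: eq_bigr => i _; rewrite mulrDl. Qed.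

Variable H : nat -> series R.
Hypothesis HH : forall j : nat, KPcurrent hf j (H j).
Variable ac : nat -> R.

Lemma phiH (j : nat) : let P := phi hf (H j) in
  bounded_by P j /\ P j = 1 /\ (forall i, i < 0 -> P i = 0) /\ (forall m, H j m = evN P j m).
Proof.
case: (HH j) => [[p Hp] _].
pose P := fun k => dlt j k + \sum_(i < j.-1) p i * dlt i k.
have hb : bounded_by P j.
  move=> k hk; rewrite /P dlt_b // add0r big1 // => i _; rewrite dlt_b ?mulr0 //.
  have := ltn_ord i; lia.
have hev : forall m, H j m = evN P j m.
  move=> m; rewrite Hp /P evN_add evN_dlt // (@evN_lin _ (index_enum _)) .
  congr (_ + _); apply: eq_bigr => i _; rewrite evN_dlt //; have := ltn_ord i; lia.
rewrite (phi_eq hb hev); split => //; split.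
  rewrite /P /dlt eqxx big1 ?addr0 // => i _.
  by case: eqP => e; [exfalso; have := ltn_ord i; lia|rewrite mulr0].
split => // i hi; rewrite /P /dlt; case: eqP => e; first by exfalso; lia.
rewrite add0r big1 // => t _; case: eqP => e2; [exfalso; lia|by rewrite mulr0].
Qed.

Lemma phiL (l : int) : -1 <= l -> let L := phi hf (Lgen H ac l) in
  monic_diff L (l + 1) /\ bounded_by L (l + 1) /\ forall m, Lgen H ac l m = evN L (l + 1) m.
Proof.
move=> hl; pose p := absz (l + 1).
have hp : l + 1 = p%:Z by rewrite /p; lia.
pose Pf j := phi hf (H j).
pose Q := fun k => Pf p k + \sum_(t < p) ac t * Pf (absz (l - t%:Z)) k.
have hlt : forall t : 'I_p, (absz (l - t%:Z))%:Z = l - t%:Z.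
  by move=> t; have := ltn_ord t; rewrite /p; lia.
have hb : bounded_by Q (l + 1).
  move=> k hk; rewrite /Q; have [b1 _] := phiH p; rewrite /Pf b1; last lia.
  rewrite add0r big1 // => t _; have [b2 _] := phiH (absz (l - t%:Z)).
  by rewrite b2 ?mulr0 // hlt; lia.
have hev : forall m, Lgen H ac l m = evN Q (l + 1) m.
  move=> m; rewrite /Lgen /Q evN_add (@evN_lin _ (index_enum _)) -/p.
  have [b1 [_ [_ e1]]] := phiH p.
  rewrite e1 hp; congr (_ + _); apply: eq_bigr => t _; congr (_ * _).
  have [b2 [_ [_ e2]]] := phiH (absz (l - t%:Z)).
  rewrite e2; apply: evN_b => //; apply: bb_le b2; rewrite hlt; lia.
rewrite (phi_eq hb hev); split; last by [].
split.
  rewrite /Q hp; have [_ [t1 _]] := phiH p; rewrite /Pf t1 big1 ?addr0 // => t _.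
  have [b2 _] := phiH (absz (l - t%:Z)); by rewrite b2 ?mulr0 // hlt; lia.
move=> j [hj|hj].
  rewrite /Q; have [_ [_ [n1 _]]] := phiH p; rewrite /Pf n1 // add0r big1 // => t _.
  by have [_ [_ [n2 _]]] := phiH (absz (l - t%:Z)); rewrite n2 ?mulr0.
exact: hb.
Qed.

Definition dlc (i : int) (B : series R) (c : nat) (m : int) :=
  \sum_(k < c) (binz i k)%:~R * iter k D (B (m - i + k%:Z)).
Definition dlB (i : int) (B : series R) (m : int) := dlc i B (absz (deg B - m + i + 1)) m.

Lemma dlc_ext B NB i m c c' : bounded_by B NB -> NB - m + i + 1 <= c%:Z ->
  NB - m + i + 1 <= c'%:Z -> dlc i B c m = dlc i B c' m.
Proof.
move=> hb h1 h2; apply: (@sum_count _ (fun k : nat => (binz i k)%:~R * iter k D (B (m - i + k%:Z))) _ _ (minn c c')); [exact: geq_minl|exact: geq_minr|].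
by move=> k hk; rewrite hb ?iD0 ?mulr0 //; lia.
Qed.

Lemma dlB_eq B NB i m c : bounded_by B NB -> NB - m + i + 1 <= c%:Z ->
  dlB i B m = dlc i B c m.
Proof.
move=> hb hcc; have hd := deg_spec (ex_intro _ NB hb).
have h0 := bb_min hd hb.
rewrite /dlB (@dlc_ext B (Num.min (deg B) NB) i m _ c h0) //; rewrite /Num.min; case: ifP; lia.
Qed.

Lemma dlB_zero B NB i m : bounded_by B NB -> i + NB < m -> dlB i B m = 0.
Proof. by move=> hb h; rewrite (@dlB_eq _ _ _ _ 0 hb) /dlc ?big_ord0 //; lia. Qed.

Lemma dlB0 B NB m : bounded_by B NB -> dlB 0 B m = B m.
Proof.
move=> hb; rewrite (@dlB_eq _ _ _ _ (absz (NB - m + 1)).+1 hb); last lia.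
rewrite /dlc big_ord_recl big1 ?addr0.
  by rewrite binz0 /= mul1r.
by move=> k _; rewrite lift0; have -> : binz 0 k.+1 = 0 by []; rewrite mul0r.
Qed.

Definition dop (X : series R) : series R := fun m => D (X m) + X (m - 1).

Lemma dlB_pascal B NB i m : bounded_by B NB ->
  dlB (i + 1) B m = dop (dlB i B) m.
Proof.
move=> hb; rewrite /dop; set c := absz (NB - m + i + 2).
rewrite (@dlB_eq _ _ _ _ c.+1 hb); last lia.
rewrite (@dlB_eq _ _ _ (m - 1) c.+1 hb); last lia.
rewrite (@dlB_eq _ _ _ _ c hb); last lia.
rewrite /dlc !big_ord_recl !binz0 /= !mul1r Dsum /bump /=.
rewrite [RHS]addrCA; congr (_ + _); first by congr B; lia.
rewrite -big_split; apply: eq_bigr => k _.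
rewrite add1n binzS intrD mulrDl addrC Dcz /= add0n.
by congr (_ * D (iter _ D (B _)) + _ * D (iter _ D (B _))); lia.
Qed.

Lemma dop_inj X Y N : bounded_by X N -> bounded_by Y N ->
  (forall m, dop X m = dop Y m) -> X = Y.
Proof.
move=> hX hY h; apply: functional_extensionality.
apply: (@zdown (fun j => X j = Y j) N); first by move=> j hj; rewrite hX ?hY.
move=> M IH; have := h (M + 1); rewrite /dop IH; last lia.
have -> : M + 1 - 1 = M by lia.
by move/addrI.
Qed.

Lemma pmul_dl A B NA NB m : bounded_by A NA -> bounded_by B NB ->
  pmul D A B m = \sum_(i <- zrange (m - NB) NA) A i * dlB i B m.
Proof.
move=> hA hB.
have hdA := deg_spec (ex_intro _ NA hA); have hdB := deg_spec (ex_intro _ NB hB).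
have mono : forall NA1 NB1 NA0 NB0, bounded_by A NA0 -> bounded_by B NB0 ->
   NA0 <= NA1 -> NB0 <= NB1 ->
   \sum_(i <- zrange (m - NB1) NA1) A i * dlB i B m =
   \sum_(i <- zrange (m - NB0) NA0) A i * dlB i B m.
  move=> NA1 NB1 NA0 NB0 h1 h2 l1 l2; apply: zsum_sub; first by move=> i; lia.
  move=> i _ hi; case: (lerP i NA0) => c.
    by rewrite (dlB_zero h2) ?mulr0 //; lia.
  by rewrite h1 ?mul0r.
have key : forall NA1 NB1 NA2 NB2, bounded_by A NA1 -> bounded_by B NB1 ->
   bounded_by A NA2 -> bounded_by B NB2 ->
   \sum_(i <- zrange (m - NB1) NA1) A i * dlB i B m =
   \sum_(i <- zrange (m - NB2) NA2) A i * dlB i B m.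
  move=> NA1 NB1 NA2 NB2 h1 h2 h3 h4.
  rewrite (mono _ _ _ _ (bb_min h1 h3) (bb_min h2 h4)); try (rewrite /Num.min; case: ifP; lia).
  by rewrite [RHS](mono _ _ _ _ (bb_min h1 h3) (bb_min h2 h4)) //; rewrite /Num.min; case: ifP; lia.
rewrite (key _ _ _ _ hA hB hdA hdB) /pmul; apply: eq_bigr => i _.
rewrite /dlB /dlc mulr_sumr; apply: eq_bigr => k _; ring.
Qed.

Lemma pmul_b A B NA NB : bounded_by A NA -> bounded_by B NB ->
  bounded_by (pmul D A B) (NA + NB).
Proof.
move=> hA hB m hm; rewrite (pmul_dl _ hA hB) big1_seq // => i /andP[_].
rewrite mem_zrange => hi; rewrite (dlB_zero hB) ?mulr0 //; lia.
Qed.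

Lemma dop_b X N : bounded_by X N -> bounded_by (dop X) (N + 1).
Proof. by move=> h m hm; rewrite /dop !h ?D0 ?addr0 //; lia. Qed.

Lemma dlB_b B NB i : bounded_by B NB -> bounded_by (dlB i B) (i + NB).
Proof. by move=> h m hm; apply: (dlB_zero h). Qed.

Lemma pmul_dop Y C NY NC : bounded_by Y NY -> bounded_by C NC ->
  pmul D (dop Y) C = dop (pmul D Y C).
Proof.
move=> hY hC; apply: functional_extensionality => m.
rewrite /dop (pmul_dl _ (dop_b hY) hC) !(pmul_dl _ hY hC) Dsum.
under eq_bigr do rewrite mulrDl.
rewrite big_split /=.
have W : forall F : int -> R, forall a b,
   m - NC - 1 <= a -> b <= NY + 1 ->
   (forall j, m - NC - 1 <= j <= NY + 1 -> ~~ (a <= j <= b) -> F j = 0) ->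
   \sum_(j <- zrange a b) F j = \sum_(j <- zrange (m - NC - 1) (NY + 1)) F j.
  by move=> F a b ha hb hz; symmetry; apply: zsum_sub => // j; lia.
rewrite (W (fun j => D (Y j) * dlB j C m)); first last.
- move=> j hj hn; case: (lerP j (NY + 1)) => c.
    by rewrite (dlB_zero hC) ?mulr0 //; lia.
  by exfalso; lia.
- lia.
- lia.
have -> : \sum_(i <- zrange (m - NC) (NY + 1)) Y (i - 1) * dlB i C m =
    \sum_(j <- zrange (m - NC - 1) NY) Y j * dlB (j + 1) C m.
  rewrite (zsum_reidx _ _ _ 1); have -> : m - NC - 1 = m - NC - 1 by [].
  have -> : NY + 1 - 1 = NY by lia.
  by apply: eq_bigr => i _; have -> : i + 1 - 1 = i by lia.
rewrite (W (fun j => Y j * dlB (j + 1) C m)); first last.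
- by move=> j hj hn; rewrite hY ?mul0r //; lia.
- lia.
- lia.
rewrite (W (fun j => D (Y j * dlB j C m))); first last.
- move=> j hj hn; case: (lerP j NY) => c.
    by rewrite (dlB_zero hC) ?mulr0 ?D0 //; lia.
  by rewrite hY ?mul0r ?D0 //; lia.
- lia.
- lia.
rewrite (W (fun j => Y j * dlB j C (m - 1))); first last.
- by move=> j hj hn; rewrite hY ?mul0r //; lia.
- lia.
- lia.
rewrite -!big_split; apply: eq_bigr => j _.
rewrite /= (dlB_pascal _ _ hC) /dop HDmul; ring.
Qed.

Lemma dlB_dop B NB i : bounded_by B NB -> dlB (i + 1) B = dop (dlB i B).
Proof. by move=> h; apply: functional_extensionality => m; apply: dlB_pascal h. Qed.

Lemma dlB0f B NB : bounded_by B NB -> dlB 0 B = B.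
Proof. by move=> h; apply: functional_extensionality => m; apply: dlB0 h. Qed.

Lemma assoc_dl B C NB NC : bounded_by B NB -> bounded_by C NC ->
  forall i, pmul D (dlB i B) C = dlB i (pmul D B C).
Proof.
move=> hB hC; have hBC := pmul_b hB hC.
elim/zind.
- by rewrite (dlB0f hB) (dlB0f hBC).
- move=> i IH; rewrite (dlB_dop i hB) (pmul_dop (dlB_b (i:=i) hB) hC) IH.
  by rewrite (dlB_dop i hBC).
move=> i IH.
apply: (@dop_inj _ _ (i + NB + NC)).
- exact: pmul_b (dlB_b (i:=i) hB) hC.
- by apply: bb_le (dlB_b (i:=i) hBC); lia.
move=> m; rewrite -(pmul_dop (dlB_b (i:=i) hB) hC) -(dlB_dop i hB) IH.
by rewrite (dlB_dop i hBC).
Qed.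

Lemma pmul_assoc A B C NA NB NC : bounded_by A NA -> bounded_by B NB -> bounded_by C NC ->
  pmul D (pmul D A B) C = pmul D A (pmul D B C).
Proof.
move=> hA hB hC; have hAB := pmul_b hA hB; have hBC := pmul_b hB hC.
apply: functional_extensionality => m.
rewrite (pmul_dl _ hAB hC) (pmul_dl _ hA hBC).
have e1 : \sum_(i <- zrange (m - (NB + NC)) NA) A i * dlB i (pmul D B C) m =
   \sum_(i <- zrange (m - (NB + NC)) NA) \sum_(j <- zrange (m - NC) (NA + NB))
        A i * (dlB i B j * dlB j C m).
  apply: eq_big_seq => i; rewrite mem_zrange => hi.
  have hbi : bounded_by (dlB i B) (NA + NB) by apply: bb_le (dlB_b (i:=i) hB); lia.
  rewrite -(assoc_dl hB hC) (pmul_dl _ hbi hC).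
  by rewrite mulr_sumr.
rewrite e1 exchange_big; apply: eq_big_seq => j; rewrite mem_zrange => hj.
rewrite (pmul_dl _ hA hB) mulr_suml.
rewrite [RHS](@zsum_sub _ _ (j - NB) NA); first by apply: eq_bigr => i _; rewrite mulrA.
  by move=> i; lia.
by move=> i hi hn; rewrite (dlB_zero hB) ?mul0r ?mulr0 //; lia.
Qed.

Lemma pone_b : bounded_by (pone R) 0.
Proof. by move=> k hk; rewrite /pone /sone; case: eqP => // e; lia. Qed.

Lemma pmul1 X NX : bounded_by X NX -> pmul D (pone R) X = X.
Proof.
move=> hX; apply: functional_extensionality => m.
rewrite (pmul_dl _ pone_b hX).
rewrite (eq_bigr (fun i => (i == 0)%:R * dlB i X m)) // zsum_delta.
case: ifP => h; first exact: dlB0 hX.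
by rewrite hX //; move/negbT: h; lia.
Qed.

Definition Top (Y : series R) : series R := fun m =>
  D (Y m) + \sum_(s <- zrange (m - deg Y) 1) hser hc s * Y (m - s).

Lemma Top_b Y N m : bounded_by Y N ->
  Top Y m = D (Y m) + \sum_(s <- zrange (m - N) 1) hser hc s * Y (m - s).
Proof.
move=> hY; have hd := deg_spec (ex_intro _ N hY).
by rewrite /Top -(smul_b _ hser_b hd) (smul_b _ hser_b hY).
Qed.

Lemma hf_T j m : hf (j + 1) m = Top (hf j) m.
Proof. by rewrite (hf_rec _ (@hf_b j)) (Top_b _ (@hf_b j)). Qed.

Lemma Top_bb Y N : bounded_by Y N -> bounded_by (Top Y) (N + 1).
Proof. by move=> h m hm; rewrite (Top_b _ h) h ?D0 ?add0r ?zsum_empty //; lia. Qed.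

Lemma Top_shift Y N r m : bounded_by Y N ->
  Top (fun k => Y (k - r)) m = Top Y (m - r).
Proof.
move=> hY; have hY' : bounded_by (fun k => Y (k - r)) (N + r) by move=> k hk; apply: hY; lia.
rewrite (Top_b _ hY') (Top_b _ hY); congr (_ + _).
have -> : m - r - N = m - (N + r) by lia.
by apply: eq_bigr => s _; congr (_ * Y _); lia.
Qed.

Lemma Top_inj Y1 Y2 N : bounded_by Y1 N -> bounded_by Y2 N ->
  (forall m, Top Y1 m = Top Y2 m) -> Y1 = Y2.
Proof.
move=> h1 h2 hT; apply: functional_extensionality.
apply: (@zdown (fun j => Y1 j = Y2 j) N); first by move=> j hj; rewrite h1 ?h2.
move=> M IH; case: (ltrP N M) => hM; first by rewrite h1 ?h2.
have := hT (M + 1); rewrite (Top_b _ h1) (Top_b _ h2) IH; last lia.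
rewrite !(@zsum_split1 _ _ _ _ 1); try lia.
rewrite hser1 !mul1r; have -> : M + 1 - 1 = M by lia.
rewrite [X in _ + (_ + X) = _]big_seq_cond [X in _ = _ + (_ + X)]big_seq_cond.
rewrite (eq_bigr (fun s => hser hc s * Y2 (M + 1 - s))).
  by move/addrI/addIr.
by move=> s /andP[]; rewrite mem_zrange => hs hn; rewrite IH //; move/eqP: hn; lia.
Qed.

Lemma ev_dop X NX m : bounded_by X NX ->
  evN (dop X) (NX + 1) m = Top (evN X NX) m.
Proof.
move=> hX; rewrite (Top_b _ (@evN_bb X NX)) /evN.
have hfm : forall j, j < m -> hf j m = 0 by move=> j hj; apply: hf_b.
have b : \sum_(j <- zrange (m - 1) NX) X j *
            \sum_(s <- zrange (m - j) 1) hser hc s * hf j (m - s) =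
         \sum_(s <- zrange (m - NX) 1) hser hc s *
            \sum_(j <- zrange (m - s) NX) X j * hf j (m - s).
  have e1 : forall j, j \in zrange (m - 1) NX ->
     X j * \sum_(s <- zrange (m - j) 1) hser hc s * hf j (m - s) =
     \sum_(s <- zrange (m - NX) 1) X j * (hser hc s * hf j (m - s)).
    move=> j; rewrite mem_zrange => hj; rewrite mulr_sumr; symmetry.
    apply: zsum_sub; first by move=> s; lia.
    by move=> s hs hn; rewrite hf_b ?mulr0 //; lia.
  rewrite (eq_big_seq _ e1) exchange_big; apply: eq_big_seq => s.
  rewrite mem_zrange => hs; rewrite mulr_sumr.
  rewrite (@zsum_sub _ _ (m - s) NX); last first.
  - by move=> j hj hn; rewrite hf_b ?mulr0 ?mul0r //; lia.
  - by move=> j; lia.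
  by apply: eq_bigr => j _; ring.
under eq_bigr do rewrite mulrDl.
rewrite big_split /= Dsum.
rewrite (zsum_reidx (fun j => X (j - 1) * hf j m) _ _ 1).
have -> : m - 1 = m - 1 by [].
have e2 : forall j, X (j + 1 - 1) * hf (j + 1) m =
   X j * D (hf j m) + X j * \sum_(s <- zrange (m - j) 1) hser hc s * hf j (m - s).
  by move=> j; rewrite (hf_rec _ (@hf_b j)) (_ : j + 1 - 1 = j) ?mulrDr //; lia.
rewrite (eq_bigr _ (fun j _ => e2 j)) big_split /= addrA.
have -> : NX + 1 - 1 = NX by lia.
rewrite b; congr (_ + _).
rewrite (@zsum_sub _ (fun j => D (X j) * hf j m) m NX); first last.
- by move=> j hj hn; case: (lerP m j) => c; [rewrite hX ?D0 ?mul0r //; lia | rewrite hfm ?mulr0].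
- by move=> j; lia.
rewrite (@zsum_sub _ (fun j => X j * D (hf j m)) m NX); first last.
- by move=> j hj hn; rewrite hfm ?D0 ?mulr0 //; lia.
- by move=> j; lia.
by rewrite -big_split; apply: eq_bigr => j _ /=; rewrite HDmul.
Qed.

Lemma ev_pmul P Q NP NQ m : bounded_by P NP -> bounded_by Q NQ ->
  evN (pmul D P Q) (NP + NQ) m =
  \sum_(i <- zrange (m - NQ) NP) P i * evN (dlB i Q) (i + NQ) m.
Proof.
move=> hP hQ; rewrite /evN.
have e1 : forall i, i \in zrange (m - NQ) NP ->
    P i * \sum_(j <- zrange m (i + NQ)) dlB i Q j * hf j m =
    \sum_(j <- zrange m (NP + NQ)) P i * (dlB i Q j * hf j m).
  move=> i; rewrite mem_zrange => hi; rewrite mulr_sumr; symmetry.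
  apply: zsum_sub; first by move=> j; lia.
  by move=> j hj hn; rewrite (dlB_zero hQ) ?mul0r ?mulr0 //; lia.
rewrite (eq_big_seq _ e1) exchange_big; apply: eq_big_seq => j.
rewrite mem_zrange => hj; rewrite (pmul_dl _ hP hQ) mulr_suml.
rewrite [RHS](@zsum_sub _ _ (j - NQ) NP); first by apply: eq_bigr => i _; rewrite mulrA.
  by move=> i; lia.
by move=> i hi hn; rewrite (dlB_zero hQ) ?mul0r ?mulr0 //; lia.
Qed.

Definition Ev (i : int) (Q : series R) (NQ : int) : series R := evN (dlB i Q) (i + NQ).

Lemma Ev_up i Q NQ : bounded_by Q NQ -> Ev (i + 1) Q NQ = Top (Ev i Q NQ).
Proof.
move=> hQ; apply: functional_extensionality => m.
rewrite /Ev (dlB_dop i hQ) -ev_dop; last exact: dlB_b.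
by rewrite (_ : i + 1 + NQ = i + NQ + 1) //; lia.
Qed.

Lemma Ev_b i Q NQ : bounded_by (Ev i Q NQ) (i + NQ).
Proof. exact: evN_bb. Qed.

Lemma Ev_shift Q NQ r : bounded_by Q NQ -> (forall m, evN Q NQ m = (m == r)%:R) ->
  forall i m, Ev i Q NQ m = hf i (m - r).
Proof.
move=> hQ hev.
have hr : r <= NQ.
  case: (lerP r NQ) => // c; have := hev r; rewrite eqxx /evN zsum_empty //.
  by move=> /esym/eqP; rewrite oner_eq0.
suff HE : forall i, Ev i Q NQ = (fun m => hf i (m - r)).
  by move=> i m; rewrite HE.
elim/zind.
- apply: functional_extensionality => m.
  rewrite /Ev (dlB0f hQ) add0r hev.
  case: Hhf => _ [-> _]; rewrite /sone; congr (_%:R); apply/eqP/eqP; lia.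
- move=> i IH; rewrite Ev_up // IH; apply: functional_extensionality => m.
  by rewrite (Top_shift _ _ (@hf_b i)) hf_T.
move=> i IH.
apply: (@Top_inj _ _ (i + NQ)); first exact: Ev_b.
  by move=> k hk; rewrite hf_b //; lia.
move=> m; rewrite -Ev_up // IH (Top_shift _ _ (@hf_b i)) hf_T //.
Qed.

Lemma ev_shiftQ P Q NP NQ r : bounded_by P NP -> bounded_by Q NQ ->
  (forall m, evN Q NQ m = (m == r)%:R) ->
  forall m, evN (pmul D P Q) (NP + NQ) m = evN P NP (m - r).
Proof.
move=> hP hQ hev m.
have hr : r <= NQ.
  case: (lerP r NQ) => // c; have := hev r; rewrite eqxx /evN zsum_empty //.
  by move=> /esym/eqP; rewrite oner_eq0.
rewrite (ev_pmul _ hP hQ) (eq_bigr (fun i => P i * hf i (m - r))); last first.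
  by move=> i _; rewrite -(Ev_shift hQ hev).
rewrite /evN.
apply: zsum_sub; first by move=> i; lia.
by move=> i hi hn; rewrite hf_b ?mulr0 //; lia.
Qed.

Lemma dlB_pone i m : dlB i (pone R) m = (i == m)%:R.
Proof.
rewrite (@dlB_eq _ _ _ _ (absz (0 - m + i + 1)).+1 pone_b); last lia.
rewrite /dlc big_ord_recl big1 ?addr0.
  rewrite binz0 /= mul1r /pone /sone; congr (_%:R); apply/eqP/eqP; lia.
move=> k _; rewrite lift0 iterSr /pone /sone Dnat iD0 mulr0.
by [].
Qed.

Lemma pmulr1 X NX : bounded_by X NX -> pmul D X (pone R) = X.
Proof.
move=> hX; apply: functional_extensionality => m.
rewrite (pmul_dl _ hX pone_b).
rewrite (eq_bigr (fun i => (i == m)%:R * X i)); last first.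
  by move=> i _; rewrite dlB_pone mulrC.
rewrite zsum_delta; case: ifP => // h.
by rewrite hX //; move/negbT: h; lia.
Qed.

Lemma main_sec (l : int) (n : nat) (hl : -1 <= l) (hn : (0 < n)%N)
    (HS1 : inS H l ac) (HS2 : inS H (l + n%:Z) ac) :
  let L1 := phi hf (Lgen H ac l) in
  let L2 := phi hf (Lgen H ac (l + n%:Z)) in
  monic_diff L1 (l + 1) /\ monic_diff L2 (l + n%:Z + 1) /\
  exists L1inv : series R,
    bounded L1inv /\ pmul D L1 L1inv = pone R /\ pmul D L1inv L1 = pone R /\
    ppow D (phi hf (zser R)) n = pmul D L1inv L2.
Proof.
move=> L1 L2.
have hl2 : -1 <= l + n%:Z by lia.
have [md1 [b1 e1]] := phiL hl.
have [md2 [b2 e2]] := phiL hl2.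
split; first exact: md1.
split; first exact: md2.
pose L := phi hf (zser R).
have hz : bounded_by (zser R) 1 by move=> k hk; rewrite /zser; case: eqP => // e; lia.
have [hLb eL] := phi_spec hz.
have hL := deg_spec hLb.
set NL := deg (phi hf (zser R)) in eL hL.
have evL : forall m, evN L NL m = (m == 1)%:R by move=> m; rewrite -eL.
have hPn : forall j : nat, bounded_by (ppow D L j) (j%:Z * NL).
  elim=> [|j IH]; first by rewrite mul0r; exact: pone_b.
  have -> : j.+1%:Z * NL = j%:Z * NL + NL by rewrite -addn1 PoszD mulrDl mul1r.
  exact: pmul_b IH hL.
pose c := fun i m => dlB i L1 m.
have c1 : forall j, c j (j + (l + 1)) = 1.
  move=> j; rewrite /c (@dlB_eq _ _ _ _ 1 b1); last lia.
  rewrite /dlc big_ord1 binz0 /= mul1r.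
  have -> : j + (l + 1) - j + 0 = l + 1 by lia.
  by case: md1.
have [Y [hY hFY]] := TRI_ex c1 pone_b.
have YL : pmul D Y L1 = pone R.
  by apply: functional_extensionality => m; rewrite (pmul_dl _ hY b1) -hFY.
have LY : pmul D L1 Y = pone R.
  have hW : bounded_by (pmul D L1 Y) 0 by apply: bb_le (pmul_b b1 hY); lia.
  apply: (@TRI_uniq _ (l + 1) c c1 _ _ 0 hW pone_b) => m.
  rewrite /FN /c -(pmul_dl _ hW b1) -(pmul_dl _ pone_b b1).
  by rewrite (pmul_assoc b1 hY b1) YL (pmulr1 b1) (pmul1 b1).
exists Y; split; first by exists (0 - (l + 1)).
split => //; split => //.
have key : forall j : nat, forall m,
    evN (pmul D L1 (ppow D L j)) (l + 1 + j%:Z * NL) m = Lgen H ac l (m - j%:Z).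
  elim=> [|j IH] m.
    rewrite mul0r addr0 subr0 (pmulr1 b1) -e1 //.
  have -> : ppow D L j.+1 = pmul D (ppow D L j) L by [].
  rewrite -(pmul_assoc b1 (hPn j) hL).
  have hX := pmul_b b1 (hPn j).
  have -> : l + 1 + j.+1%:Z * NL = l + 1 + j%:Z * NL + NL.
    by rewrite -addn1 PoszD mulrDl mul1r addrA.
  rewrite (ev_shiftQ hX hL evL) IH; congr (Lgen H ac l); lia.
have L2eq : L2 = pmul D L1 (ppow D L n).
  apply: phi_eq; first exact: pmul_b b1 (hPn n).
  move=> m; rewrite key -HS2 -HS1; congr (aser ac); lia.
by rewrite L2eq -(pmul_assoc hY b1 (hPn n)) YL (pmul1 (hPn n)).
Qed.

End Main.

Theorem mainTheorem3 (R : comNzRingType) (D : R -> R)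
    (HDadd : forall x y : R, D (x + y) = D x + D y)
    (HDmul : forall x y : R, D (x * y) = D x * y + x * D y)
    (hc ac : nat -> R) (hf : int -> series R) (H : nat -> series R)
    (Hhf : FdB D (hser hc) hf) (HH : forall j : nat, KPcurrent hf j (H j))
    (l : int) (n : nat) (hl : -1 <= l) (hn : (0 < n)%N)
    (HS1 : inS H l ac) (HS2 : inS H (l + n%:Z) ac) :
  let L1 := phi hf (Lgen H ac l) in
  let L2 := phi hf (Lgen H ac (l + n%:Z)) in
  monic_diff L1 (l + 1) /\ monic_diff L2 (l + n%:Z + 1) /\
  exists L1inv : series R,
    bounded L1inv /\ pmul D L1 L1inv = pone R /\ pmul D L1inv L1 = pone R /\
    ppow D (phi hf (zser R)) n = pmul D L1inv L2.
Proof. exact: (main_sec HDadd HDmul Hhf HH hl hn HS1 HS2). Qed.
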